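(* For any cluster decomposition $\mathbf z=\sum\mathbf z_i$ and any $i\neq j$, $\mathrm{sep}(\mathbf z_i,\mathbf z_j)>2(r_{|\mathbf z_i|}+r_{|\mathbf z_j|})$.
   Context: $M$ is a smooth Riemannian manifold with distance $\mathrm{dist}$, with $r_{conv}>0$ the infimum of the convexity radius. Configurations lie in $\mathrm{Sym}^n(M)$ (unordered tuples with multiplicity), $|\mathbf z|$ is the number of points, $+$ is union with multiplicity, and $\mathrm{sep}(\mathbf z_1,\mathbf z_2)=\min_{z\in\mathbf z_1,w\in\mathbf z_2}\mathrm{dist}(z,w)$. $\mathbf z$ is pre-confined if $\mathrm{dist}(z_i,z_j)<r_{conv}$ for all $i,j$; then $c(\mathbf z)$ is the unique minimizer of $\sum_i\mathrm{dist}(z_i,z)^2$ on $\bigcap_iB_\rho(z_i)$ for $\max\mathrm{dist}(z_i,z_j)<\rho<r_{conv}$, and $r(\mathbf z)=\max_i\mathrm{dist}(z_i,c(\mathbf z))$. A fixed clustering rule is $0<r_1<\dots<r_N\ll r_{conv}$, $0=d_1<\dots<d_N\ll r_{conv}$ with $r_k>d_k+r_{k-1}$, $d_k>6r_{k-1}$. $\mathbf z$ is confined if pre-confined and $r(\mathbf z)<r_{|\mathbf z|}$; $\mathbf z_1,\mathbf z_2$ are separated if pre-confined with $\mathrm{dist}(c(\mathbf z_1),c(\mathbf z_2))>d_{|\mathbf z_1|+|\mathbf z_2|}$; a cluster decomposition $\mathbf z=\sum\mathbf z_i$ has all parts confined and every pair of distinct parts separated. *)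

(* Defs.v *)
(* The manifold M is abstracted to a metric space (T, dist). *)
From Stdlib Require Import Reals List Permutation Classical ClassicalEpsilon.
Open Scope R_scope.

Section Defs.
Context {T : Type} (dist : T -> T -> R) (rconv : R).

Record is_metric : Prop := {
  dist_nonneg : forall x y, 0 <= dist x y;
  dist_refl : forall x, dist x x = 0;
  dist_sep : forall x y, dist x y = 0 -> x = y;
  dist_sym : forall x y, dist x y = dist y x;
  dist_tri : forall x y w, dist x w <= dist x y + dist y w }.

(* configurations in Sym^n(M): lists up to permutation; |z| = length z *)
Definition pre_confined (z : list T) : Prop :=
  forall a b, In a z -> In b z -> dist a b < rconv.

Definition Fsum (z : list T) (x : T) : R :=
  fold_right Rplus 0 (map (fun a => (dist a x) ^ 2) z).

Definition in_balls (rho : R) (z : list T) (x : T) : Prop :=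
  forall a, In a z -> dist a x < rho.

Definition is_center (z : list T) (x : T) : Prop :=
  exists rho,
    (forall a b, In a z -> In b z -> dist a b < rho) /\ rho < rconv /\
    in_balls rho z x /\
    (forall y, in_balls rho z y -> Fsum z x <= Fsum z y) /\
    (forall y, in_balls rho z y ->
       (forall w, in_balls rho z w -> Fsum z y <= Fsum z w) -> y = x).

(* c(z): the center when it exists (default x0 otherwise) *)
Definition center (x0 : T) (z : list T) : T :=
  match excluded_middle_informative (exists x, is_center z x) with
  | left H => proj1_sig (constructive_indefinite_description _ H)
  | right _ => x0
  end.

Definition c (z : list T) : option T :=
  match z with nil => None | a :: _ => Some (center a z) end.

Definition radius (z : list T) : R :=
  match c z with
  | None => 0
  | Some x => fold_right Rmax 0 (map (fun a => dist a x) z)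
  end.

Definition sep (z1 z2 : list T) : R :=
  match list_prod z1 z2 with
  | nil => 0
  | p :: ps => fold_right Rmin (dist (fst p) (snd p))
                 (map (fun q => dist (fst q) (snd q)) ps)
  end.

(* fixed clustering rule r_1<...<r_N, 0=d_1<...<d_N (indices 1..N) *)
Definition clustering_rule (N : nat) (rr dd : nat -> R) : Prop :=
  (1 <= N)%nat /\ 0 < rr 1%nat /\ dd 1%nat = 0 /\
  (forall k, (1 <= k < N)%nat -> rr k < rr (S k) /\ dd k < dd (S k)) /\
  rr N < rconv /\ dd N < rconv /\
  (forall k, (2 <= k <= N)%nat ->
     rr k > dd k + rr (k - 1)%nat /\ dd k > 6 * rr (k - 1)%nat).

Definition confined (N : nat) (rr : nat -> R) (z : list T) : Prop :=
  pre_confined z /\ (1 <= length z <= N)%nat /\ radius z < rr (length z).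

Definition separated (N : nat) (dd : nat -> R) (z1 z2 : list T) : Prop :=
  pre_confined z1 /\ pre_confined z2 /\
  (length z1 + length z2 <= N)%nat /\
  match c z1, c z2 with
  | Some x1, Some x2 => dist x1 x2 > dd (length z1 + length z2)%nat
  | _, _ => False
  end.

(* z = sum_i z_i (union with multiplicity) *)
Definition cluster_decomposition (N : nat) (rr dd : nat -> R)
    (z : list T) (parts : list (list T)) : Prop :=
  Permutation (concat parts) z /\
  (forall i, (i < length parts)%nat -> confined N rr (nth i parts nil)) /\
  (forall i j, i <> j -> (i < length parts)%nat -> (j < length parts)%nat ->
     separated N dd (nth i parts nil) (nth j parts nil)).

End Defs.

(* Main.v *)
Require Import Defs.
From Stdlib Require Import Reals List Lra Lia.
Open Scope R_scope.

Lemma fold_max_ge {T} (f : T -> R) l a : In a l -> f a <= fold_right Rmax 0 (map f l).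
Proof.
  induction l as [|b l IH]; simpl; [tauto|].
  intros [->|H]; [apply Rmax_l|]. eapply Rle_trans; [apply IH, H| apply Rmax_r].
Qed.

Lemma fold_min_gt (g : R) (m : R) (l : list R) : g > m -> (forall x, In x l -> x > m) ->
  fold_right Rmin g l > m.
Proof.
  induction l as [|b l IH]; simpl; intros Hg H; [lra|].
  unfold Rmin; destruct (Rle_dec _ _).
  - apply H; auto.
  - apply IH; auto.
Qed.

Lemma rr_mono (N : nat) (rr : nat -> R) :
  (forall k, (1 <= k < N)%nat -> rr k < rr (S k)) ->
  forall a d, (1 <= a)%nat -> (a + d <= N)%nat -> rr a <= rr (a + d)%nat.
Proof.
  intros H a d Ha. induction d as [|d IH]; intros Hd.
  - rewrite Nat.add_0_r; lra.
  - replace (a + S d)%nat with (S (a + d)) by lia.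
    eapply Rle_trans; [apply IH; lia|]. left; apply H; lia.
Qed.


Theorem lemma2p10 (T : Type) (dist : T -> T -> R) (rconv : R)
    (N : nat) (rr dd : nat -> R) (z : list T) (parts : list (list T)) :
  is_metric dist -> 0 < rconv ->
  clustering_rule rconv N rr dd ->
  cluster_decomposition dist rconv N rr dd z parts ->
  forall i j, i <> j -> (i < length parts)%nat -> (j < length parts)%nat ->
    sep dist (nth i parts nil) (nth j parts nil) >
      2 * (rr (length (nth i parts nil)) + rr (length (nth j parts nil))).
Proof.
  intros Hm _ Hrule [_ [Hconf Hsep]] i j Hij Hi Hj.
  pose proof (Hconf i Hi) as [_ [Hl1 Hr1]].
  pose proof (Hconf j Hj) as [_ [Hl2 Hr2]].
  pose proof (Hsep i j Hij Hi Hj) as [_ [_ [Hlen Hc]]].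
  set (z1 := nth i parts nil) in *. set (z2 := nth j parts nil) in *.
  clearbody z1 z2.
  destruct Hrule as [HN [_ [_ [Hinc [_ [_ Hk]]]]]].
  set (a := length z1) in *. set (b := length z2) in *.
  assert (Hmono := rr_mono N rr (fun k H => proj1 (Hinc k H))).
  assert (Hra : rr a <= rr (a + b - 1)%nat).
  { replace (a + b - 1)%nat with (a + (b - 1))%nat by lia. apply Hmono; lia. }
  assert (Hrb : rr b <= rr (a + b - 1)%nat).
  { replace (a + b - 1)%nat with (b + (a - 1))%nat by lia. apply Hmono; lia. }
  assert (Hab : (2 <= a + b <= N)%nat) by lia. destruct (Hk (a + b)%nat Hab) as [_ Hd].
  destruct z1 as [|x1 z1']; [unfold a in Hl1; simpl in Hl1; lia|].
  destruct z2 as [|x2 z2']; [unfold b in Hl2; simpl in Hl2; lia|].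
  unfold radius in Hr1, Hr2. simpl c in Hc, Hr1, Hr2. simpl in Hc, Hr1, Hr2.
  set (c1 := center dist rconv x1 (x1 :: z1')) in *.
  set (c2 := center dist rconv x2 (x2 :: z2')) in *.
  assert (Hpair : forall p, In p (list_prod (x1 :: z1') (x2 :: z2')) ->
     dist (fst p) (snd p) > 2 * (rr a + rr b)).
  { intros [p q] Hp. apply in_prod_iff in Hp as [Hp Hq]. simpl.
    pose proof (fold_max_ge (fun a0 => dist a0 c1) _ _ Hp) as E1.
    pose proof (fold_max_ge (fun a0 => dist a0 c2) _ _ Hq) as E2.
    simpl in E1, E2.
    pose proof (Defs.dist_tri dist Hm c1 p c2).
    pose proof (Defs.dist_tri dist Hm p q c2).
    pose proof (Defs.dist_sym dist Hm c1 p).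
    change (S (length z1' + b)) with (a + b)%nat in Hc. lra. }
  unfold sep.
  destruct (list_prod (x1 :: z1') (x2 :: z2')) as [|p ps] eqn:HeqL; [simpl in HeqL; discriminate|].
  apply fold_min_gt.
  - apply (Hpair p); left; auto.
  - intros x Hx. apply in_map_iff in Hx as [q [<- Hq]]. apply Hpair; right; auto.
Qed.
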